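(* Let $(Q,P)$ be a weakly quasi-lattice ordered group and let $\Lambda$ be a $P$-graph with $\mathrm{FA}(\Lambda)\neq\emptyset$. For $\mu,\nu\in\mathrm{FA}(\Lambda)$ and finite $J,K\subseteq\Lambda$, let $$Z(\mu\setminus J,\nu\setminus K)=\{(x,d(\mu)d(\nu)^{-1},y)\in\mathcal{G}(\Lambda): \mu\in x,\ x\cap J=\emptyset,\ \nu\in y,\ y\cap K=\emptyset,\ x\cdot d(\mu)=y\cdot d(\nu)\}.$$ The collection of all such sets, where $\mu,\nu\in\mathrm{FA}(\Lambda)$ and $J,K$ are finite subsets of $\Lambda$, is a basis for the topology on $\mathcal{G}(\Lambda)$.
   Context: $(Q,P)$ weakly quasi-lattice ordered: $Q$ a discrete group, $P\subseteq Q$ a subsemigroup containing the identity $e$ with $P\cap P^{-1}=\{e\}$, and, with $p\le r$ meaning $pq=r$ for some $q\in P$, any two elements of $P$ with a common upper bound have a least common upper bound. A $P$-graph is a countable small category $\Lambda$ (range/source $r,s$) with a functor $d:\Lambda\to P$ with unique factorisation (if $d(\lambda)=pq$ there are unique $\mu,\nu$ with $\lambda=\mu\nu$, $d(\mu)=p$, $d(\nu)=q$). Write $\Lambda^m=d^{-1}(m)$, $\lambda\Lambda=\{\lambda\mu: s(\lambda)=r(\mu)\}$, $\mu\preceq\lambda$ iff $\lambda\in\mu\Lambda$. $\mathrm{FA}(\Lambda)$ is the set of $\lambda$ such that for all $\mu\in\lambda\Lambda,\nu\in\Lambda$ there is finite $J\subseteq\Lambda$ with $\mu\Lambda\cap\nu\Lambda=\bigcup_{\kappa\in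 J}\kappa\Lambda$. A filter is a nonempty hereditary and directed subset of $\Lambda$ (w.r.t. $\preceq$). $\mathcal{P}(\Lambda)$ has the product topology from $\{0,1\}^\Lambda$ (basis $\{x: K_1\subseteq x\subseteq\Lambda\setminus K_2\}$, $K_1,K_2$ finite); subsets have the subspace topology. Path space $\mathcal{X}(\Lambda)=\{x\text{ filter}: x\cap\mathrm{FA}(\Lambda)\neq\emptyset\}$. For $x\in\mathcal{X}(\Lambda)$, $m\in P$ with $x\cap\Lambda^m\neq\emptyset$ (write $x\in\mathrm{dom}(m)$), $x(0,m)$ is the unique element of $x\cap\Lambda^m$ and $x\cdot m=\{\mu: x(0,m)\mu\in x\}$. The path groupoid $\mathcal{G}(\Lambda)$ is the set of $(x,q,y)\in\mathcal{X}(\Lambda)\times Q\times\mathcal{X}(\Lambda)$ such that $q=mn^{-1}$, $x\in\mathrm{dom}(m)$, $y\in\mathrm{dom}(n)$, $x\cdot m=y\cdot n$ for some $m,n\in P$, with product $(x,q,y)(y,r,z)=(x,qr,z)$, inverse $(y,q^{-1},x)$, and the topology generated by the basis of sets $\{(x,mn^{-1},y)\in\mathcal{G}(\Lambda): x\in U,\ y\in V,\ x\in\mathrm{dom}(m),\ y\in\mathrm{dom}(n),\ x\cdot m=y\cdot n\}$ for $m,n\in P$ and $U,V\subseteq\mathcal{X}(\Lambda)$ open. *)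

(* Defs.v *)
From Stdlib Require Import List.
Import ListNotations.
Set Implicit Arguments.

Record WQLOG := {
  Q :> Type;
  qmul : Q -> Q -> Q;
  qinv : Q -> Q;
  qe : Q;
  qmul_assoc : forall a b c, qmul a (qmul b c) = qmul (qmul a b) c;
  qmul_e_l : forall a, qmul qe a = a;
  qmul_e_r : forall a, qmul a qe = a;
  qmul_inv_l : forall a, qmul (qinv a) a = qe;
  qmul_inv_r : forall a, qmul a (qinv a) = qe;
  Pc : Q -> Prop;
  Pc_e : Pc qe;
  Pc_mul : forall a b, Pc a -> Pc b -> Pc (qmul a b);
  Pc_cap : forall a, Pc a -> Pc (qinv a) -> a = qe;
  Pc_wqlo : forall p q, Pc p -> Pc q ->
    (exists r, Pc r /\ (exists a, Pc a /\ qmul p a = r) /\ (exists b, Pc b /\ qmul q b = r)) ->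
    exists l, Pc l /\ (exists a, Pc a /\ qmul p a = l) /\ (exists b, Pc b /\ qmul q b = l) /\
      forall r, Pc r -> (exists a, Pc a /\ qmul p a = r) -> (exists b, Pc b /\ qmul q b = r) ->
        exists c, Pc c /\ qmul l c = r
}.

(* A countable small category with morphisms [Mor], objects [Obj]; composition
   [comp l m] (= lm, first m then l) is meaningful when [src l = rng m]. *)
Record PGraph (G : WQLOG) := {
  Obj : Type;
  Mor : Type;
  rng : Mor -> Obj;
  src : Mor -> Obj;
  idm : Obj -> Mor;
  comp : Mor -> Mor -> Mor;
  src_idm : forall v, src (idm v) = v;
  rng_idm : forall v, rng (idm v) = v;
  src_comp : forall l m, src l = rng m -> src (comp l m) = src m;
  rng_comp : forall l m, src l = rng m -> rng (comp l m) = rng l;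
  comp_idm_l : forall l, comp (idm (rng l)) l = l;
  comp_idm_r : forall l, comp l (idm (src l)) = l;
  comp_assoc : forall a b c, src a = rng b -> src b = rng c ->
                 comp a (comp b c) = comp (comp a b) c;
  countable_Mor : exists f : Mor -> nat, forall a b, f a = f b -> a = b;
  deg : Mor -> G;
  deg_P : forall l, Pc G (deg l);
  deg_idm : forall v, deg (idm v) = qe G;
  deg_comp : forall l m, src l = rng m -> deg (comp l m) = qmul G (deg l) (deg m);
  unique_fact : forall l p q, Pc G p -> Pc G q -> deg l = qmul G p q ->
    exists mu nu, src mu = rng nu /\ l = comp mu nu /\ deg mu = p /\ deg nu = q /\
      forall mu' nu', src mu' = rng nu' -> l = comp mu' nu' -> deg mu' = p -> deg nu' = q ->
        mu' = mu /\ nu' = nu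
}.

Section PGraphDefs.
Variables (G : WQLOG) (L : PGraph G).
Notation M := (Mor L).

Definition inLam (lam kappa : M) : Prop :=
  exists mu, src L lam = rng L mu /\ kappa = comp L lam mu.

Definition preceq (mu lam : M) : Prop := inLam mu lam.

Definition FA (lam : M) : Prop :=
  forall mu nu, inLam lam mu ->
    exists J : list M, forall kappa,
      (inLam mu kappa /\ inLam nu kappa) <-> exists k, In k J /\ inLam k kappa.

Definition is_filter (x : M -> Prop) : Prop :=
  (exists l, x l) /\
  (forall mu lam, preceq mu lam -> x lam -> x mu) /\
  (forall l m, x l -> x m -> exists n, x n /\ preceq l n /\ preceq m n).

(* topology on P(Λ) = {0,1}^Λ *)
Definition basicP (K1 K2 : list M) (x : M -> Prop) : Prop :=
  (forall k, In k K1 -> x k) /\ (forall k, In k K2 -> ~ x k).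

Definition Popen (U : (M -> Prop) -> Prop) : Prop :=
  forall x, U x -> exists K1 K2, basicP K1 K2 x /\ forall y, basicP K1 K2 y -> U y.

Definition Xpath (x : M -> Prop) : Prop :=
  is_filter x /\ exists l, x l /\ FA l.

Definition Xopen (U : (M -> Prop) -> Prop) : Prop :=
  (forall x, U x -> Xpath x) /\
  exists O, Popen O /\ forall x, Xpath x -> (U x <-> O x).

Definition xdom (x : M -> Prop) (m : G) : Prop := exists l, x l /\ deg L l = m.

(* x · m = { mu : x(0,m) mu ∈ x }, with x(0,m) the (unique) element of x ∩ Λ^m *)
Definition shift (x : M -> Prop) (m : G) (mu : M) : Prop :=
  exists l, x l /\ deg L l = m /\ src L l = rng L mu /\ x (comp L l mu).

Definition set_eq (A B : M -> Prop) : Prop := forall mu, A mu <-> B mu.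

Definition GPt : Type := ((M -> Prop) * G * (M -> Prop))%type.

Definition Gmem (g : GPt) : Prop :=
  let '(x, q, y) := g in
  Xpath x /\ Xpath y /\
  exists m n, Pc G m /\ Pc G n /\ q = qmul G m (qinv G n) /\
    xdom x m /\ xdom y n /\ set_eq (shift x m) (shift y n).

Definition Gbasic (m n : G) (U V : (M -> Prop) -> Prop) (g : GPt) : Prop :=
  let '(x, q, y) := g in
  Gmem g /\ q = qmul G m (qinv G n) /\ U x /\ V y /\
  xdom x m /\ xdom y n /\ set_eq (shift x m) (shift y n).

Definition Gopen (W : GPt -> Prop) : Prop :=
  forall g, W g -> exists m n U V, Pc G m /\ Pc G n /\ Xopen U /\ Xopen V /\
    Gbasic m n U V g /\ forall h, Gbasic m n U V h -> W h.

Definition Zset (mu nu : M) (J K : list M) (g : GPt) : Prop :=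
  let '(x, q, y) := g in
  Gmem g /\ q = qmul G (deg L mu) (qinv G (deg L nu)) /\
  x mu /\ (forall k, In k J -> ~ x k) /\
  y nu /\ (forall k, In k K -> ~ y k) /\
  set_eq (shift x (deg L mu)) (shift y (deg L nu)).

Definition is_basis_of_Gtop (B : (GPt -> Prop) -> Prop) : Prop :=
  (forall Z, B Z -> Gopen Z) /\
  (forall W, Gopen W -> forall g, W g -> exists Z, B Z /\ Z g /\ forall h, Z h -> W h).

End PGraphDefs.

(* Main.v *)
Require Import Defs.
From Stdlib Require Import List.
Import ListNotations.

Lemma inLam_trans {G : WQLOG} {L : PGraph G} (a b c : Mor L) :
  inLam L a b -> inLam L b c -> inLam L a c.
Proof.
  intros [u [Hu ->]] [v [Hv ->]].
  rewrite (src_comp L a u Hu) in Hv.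
  exists (comp L u v). split.
  - rewrite (rng_comp L u v Hv). exact Hu.
  - symmetry. apply comp_assoc; assumption.
Qed.

Lemma FA_ext {G : WQLOG} {L : PGraph G} (l l' : Mor L) :
  FA L l -> inLam L l l' -> FA L l'.
Proof.
  intros H Hl mu nu Hm. apply H. eapply inLam_trans; eauto.
Qed.

Lemma grp_cancel (G : WQLOG) (a b c : G) : qmul G a b = qmul G a c -> b = c.
Proof.
  intro H. rewrite <- (qmul_e_l G b), <- (qmul_e_l G c), <- (qmul_inv_l G a).
  rewrite <- !qmul_assoc, H. reflexivity.
Qed.

Lemma grp_q (G : WQLOG) (m n d : G) :
  qmul G (qmul G m d) (qinv G (qmul G n d)) = qmul G m (qinv G n).
Proof.
  assert (Hi : qinv G (qmul G n d) = qmul G (qinv G d) (qinv G n)).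
  { apply (grp_cancel G (qmul G n d)). rewrite qmul_inv_r.
    rewrite <- qmul_assoc, (qmul_assoc G d), qmul_inv_r, qmul_e_l, qmul_inv_r. reflexivity. }
  rewrite Hi, <- qmul_assoc, (qmul_assoc G d), qmul_inv_r, qmul_e_l. reflexivity.
Qed.

Lemma cancel_l {G : WQLOG} {L : PGraph G} (l a b : Mor L) :
  src L l = rng L a -> src L l = rng L b -> comp L l a = comp L l b -> a = b.
Proof.
  intros Ha Hb H.
  assert (Hd : deg L a = deg L b).
  { apply (grp_cancel G (deg L l)). rewrite <- !deg_comp by assumption. rewrite H. reflexivity. }
  destruct (unique_fact L (comp L l a) (deg L l) (deg L a) (deg_P L l) (deg_P L a) (deg_comp L l a Ha))
    as [mu [nu [_ [_ [_ [_ U]]]]]].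
  destruct (U l a Ha eq_refl eq_refl eq_refl) as [_ E1].
  destruct (U l b Hb H eq_refl (eq_sym Hd)) as [_ E2]. congruence.
Qed.

Lemma filter_uniq {G : WQLOG} {L : PGraph G} (x : Mor L -> Prop) (l1 l2 : Mor L) :
  is_filter L x -> x l1 -> x l2 -> deg L l1 = deg L l2 -> l1 = l2.
Proof.
  intros [_ [_ Hd]] H1 H2 Hdeg.
  destruct (Hd l1 l2 H1 H2) as [c [_ [[a [Ha ->]] [b [Hb E]]]]].
  assert (Hab : deg L a = deg L b).
  { apply (grp_cancel G (deg L l1)). rewrite <- deg_comp by assumption.
    rewrite Hdeg, <- deg_comp by assumption. rewrite E. reflexivity. }
  destruct (unique_fact L (comp L l1 a) (deg L l1) (deg L a) (deg_P L l1) (deg_P L a) (deg_comp L l1 a Ha))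
    as [mu [nu [_ [_ [_ [_ U]]]]]].
  destruct (U l1 a Ha eq_refl eq_refl eq_refl) as [E1 _].
  destruct (U l2 b Hb E (eq_sym Hdeg) (eq_sym Hab)) as [E2 _]. congruence.
Qed.

Lemma filter_list {G : WQLOG} {L : PGraph G} (x : Mor L -> Prop) (K : list (Mor L)) :
  is_filter L x -> forall a, x a -> (forall k, In k K -> x k) ->
  exists c, x c /\ preceq L a c /\ forall k, In k K -> preceq L k c.
Proof.
  intros Hf. induction K as [|k K IH]; intros a Ha HK.
  - exists a. split; [exact Ha|]. split; [|intros k []].
    exists (idm L (src L a)). rewrite rng_idm. split; [reflexivity|]. symmetry. apply comp_idm_r.
  - destruct (IH a Ha (fun j Hj => HK j (or_intror Hj))) as [c [Hc [Hac HK']]].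
    destruct Hf as [H0 [Hh Hd]].
    destruct (Hd c k Hc (HK k (or_introl eq_refl))) as [c' [Hc' [Hcc' Hkc']]].
    exists c'. split; [exact Hc'|]. split; [exact (inLam_trans _ c _ Hac Hcc')|].
    intros j [<-|Hj]; [exact Hkc'|]. exact (inLam_trans _ c _ (HK' j Hj) Hcc').
Qed.

Lemma hered {G : WQLOG} {L : PGraph G} (x : Mor L -> Prop) (a b : Mor L) :
  is_filter L x -> src L a = rng L b -> x (comp L a b) -> x a.
Proof.
  intros [_ [Hh _]] E H. apply (Hh a (comp L a b)); [|exact H]. exists b. split; [exact E|reflexivity].
Qed.

Lemma shift_ext {G : WQLOG} {L : PGraph G} (x : Mor L -> Prop) (l al ga : Mor L) :
  is_filter L x -> x l -> src L l = rng L al -> x (comp L l al) -> src L al = rng L ga ->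
  (shift L x (deg L (comp L l al)) ga <-> shift L x (deg L l) (comp L al ga)).
Proof.
  intros Hf Hl E1 Hla E2. split.
  - intros [l5 [H5 [D5 [S5 H5']]]].
    assert (l5 = comp L l al) by (apply (filter_uniq x); assumption). subst l5.
    exists l. split; [exact Hl|]. split; [reflexivity|]. split.
    + rewrite rng_comp by exact E2. exact E1.
    + rewrite comp_assoc by assumption. exact H5'.
  - intros [l6 [H6 [D6 [S6 H6']]]].
    assert (l6 = l) by (apply (filter_uniq x); assumption). subst l6.
    exists (comp L l al). split; [exact Hla|]. split; [reflexivity|]. split.
    + rewrite src_comp by exact E1. exact E2.
    + rewrite <- comp_assoc by assumption. exact H6'.
Qed.

Lemma shift_transfer {G : WQLOG} {L : PGraph G} (x y : Mor L -> Prop) (l l' al : Mor L) :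
  is_filter L x -> is_filter L y -> x l -> y l' ->
  src L l = rng L al -> src L l' = rng L al -> x (comp L l al) -> y (comp L l' al) ->
  (forall ga, shift L x (deg L (comp L l al)) ga -> shift L y (deg L (comp L l' al)) ga) ->
  forall be, shift L x (deg L l) be -> shift L y (deg L l') be.
Proof.
  intros Hfx Hfy Hl Hl' E E' Hla Hla' H be [l2 [H2 [D2 [S2 H2']]]].
  assert (l2 = l) by (apply (filter_uniq x); assumption). subst l2.
  destruct Hfx as [A [B C]].
  destruct (C _ _ H2' Hla) as [c [Hc [[g1 [G1 Ec1]] [g2 [G2 Ec2]]]]].
  assert (Sb : src L be = rng L g1) by (rewrite <- G1; rewrite src_comp by exact S2; reflexivity).
  assert (Sa : src L al = rng L g2) by (rewrite <- G2; rewrite src_comp by exact E; reflexivity).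
  assert (Hg2 : shift L x (deg L (comp L l al)) g2).
  { exists (comp L l al). split; [exact Hla|]. split; [reflexivity|]. split; [exact G2|].
    rewrite <- Ec2. exact Hc. }
  apply H in Hg2.
  apply (shift_ext y l' al g2 Hfy Hl' E' Hla' Sa) in Hg2.
  assert (Eq : comp L be g1 = comp L al g2).
  { apply (cancel_l l).
    - rewrite rng_comp by exact Sb. exact S2.
    - rewrite rng_comp by exact Sa. exact E.
    - rewrite !comp_assoc by assumption. congruence. }
  rewrite <- Eq in Hg2.
  destruct Hg2 as [l6 [H6 [D6 [S6 H6']]]].
  rewrite rng_comp in S6 by exact Sb.
  exists l6. split; [exact H6|]. split; [exact D6|]. split; [exact S6|].
  rewrite comp_assoc in H6' by assumption.
  apply (hered y _ g1 Hfy); [|exact H6'].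
  rewrite src_comp by exact S6. exact Sb.
Qed.

Lemma shift_transfer2 {G : WQLOG} {L : PGraph G} (x y : Mor L -> Prop) (l l' al : Mor L) :
  is_filter L x -> is_filter L y -> x l -> y l' ->
  src L l = rng L al -> src L l' = rng L al -> x (comp L l al) -> y (comp L l' al) ->
  (forall be, shift L x (deg L l) be -> shift L y (deg L l') be) ->
  forall ga, shift L x (deg L (comp L l al)) ga -> shift L y (deg L (comp L l' al)) ga.
Proof.
  intros Hfx Hfy Hl Hl' E E' Hla Hla' H ga Hg.
  assert (Sa : src L al = rng L ga).
  { destruct Hg as [l5 [H5 [D5 [S5 _]]]].
    assert (l5 = comp L l al) by (apply (filter_uniq x); assumption). subst l5.
    rewrite src_comp in S5 by exact E. exact S5. }
  apply (shift_ext y l' al ga Hfy Hl' E' Hla' Sa).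
  apply H. apply (shift_ext x l al ga Hfx Hl E Hla Sa). exact Hg.
Qed.

Theorem proposition5p23 (G : WQLOG) (L : PGraph G) :
  (exists l, @FA G L l) ->
  @is_basis_of_Gtop G L
    (fun Z => exists mu nu (J K : list (Mor L)),
        @FA G L mu /\ @FA G L nu /\ Z = @Zset G L mu nu J K).
Proof.
  intros _. split.
  - intros Z [mu [nu [J [K [Fmu [Fnu ->]]]]]].
    intros [[x q] y] Hg.
    exists (deg L mu), (deg L nu),
      (fun x => Xpath L x /\ x mu /\ forall k, In k J -> ~ x k),
      (fun y => Xpath L y /\ y nu /\ forall k, In k K -> ~ y k).
    destruct Hg as [Gm [Hq [Hx [HJ [Hy [HK Hs]]]]]].
    pose proof Gm as [Xx [Xy _]].
    split; [apply deg_P|]. split; [apply deg_P|].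
    split.
    { split; [intros z Hz; apply Hz|].
      exists (basicP L [mu] J). split.
      - intros z Hz. exists [mu], J. split; [exact Hz| intros w Hw; exact Hw].
      - intros z Xz. split.
        + intros [_ [H1 H2]]. split; [intros k [<-|[]]; exact H1|exact H2].
        + intros [H1 H2]. split; [exact Xz|]. split; [apply H1; left; reflexivity|exact H2]. }
    split.
    { split; [intros z Hz; apply Hz|].
      exists (basicP L [nu] K). split.
      - intros z Hz. exists [nu], K. split; [exact Hz| intros w Hw; exact Hw].
      - intros z Xz. split.
        + intros [_ [H1 H2]]. split; [intros k [<-|[]]; exact H1|exact H2].
        + intros [H1 H2]. split; [exact Xz|]. split; [apply H1; left; reflexivity|exact H2]. }
    split.
    { simpl. split; [exact Gm|]. split; [exact Hq|]. split; [auto|]. split; [auto|].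
      split; [exists mu; auto|]. split; [exists nu; auto|]. exact Hs. }
    intros [[x' q'] y'] [Gm' [Hq' [[_ [Ux1 Ux2]] [[_ [Vy1 Vy2]] [_ [_ Hs']]]]]].
    simpl. split; [exact Gm'|]. split; [exact Hq'|]. split; [exact Ux1|]. split; [exact Ux2|].
    split; [exact Vy1|]. split; [exact Vy2|]. exact Hs'.
  - intros W HW g Hg.
    destruct (HW g Hg) as [m [n [U [V [Pm [Pn [XU [XV [Hgb Hsub]]]]]]]]].
    destruct g as [[x q] y].
    destruct Hgb as [Gm [Hq [Ux [Vy [[l [Hl Dl]] [[l' [Hl' Dl']] Hs]]]]]].
    subst m n.
    pose proof Gm as [[Fx [f0 [Hf0 FA0]]] [[Fy [f1 [Hf1 FA1]]] _]].
    destruct XU as [XU1 [O [PO HO]]].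
    destruct XV as [XV1 [O' [PO' HO']]].
    destruct (PO x (proj1 (HO x (conj Fx (ex_intro _ f0 (conj Hf0 FA0)))) Ux))
      as [K1 [K2 [[B1 B2] BO]]].
    destruct (PO' y (proj1 (HO' y (conj Fy (ex_intro _ f1 (conj Hf1 FA1)))) Vy))
      as [K1' [K2' [[B1' B2'] BO']]].
    destruct (filter_list x (f0 :: K1) Fx l Hl) as [a [Ha [Hla Hall]]].
    { intros k [<-|Hk]; [exact Hf0|exact (B1 k Hk)]. }
    destruct Hla as [a0 [Sa0 Ea]].
    assert (Sh0 : shift L x (deg L l) a0).
    { exists l. split; [exact Hl|]. split; [reflexivity|]. split; [exact Sa0|]. rewrite <- Ea; exact Ha. }
    apply Hs in Sh0. destruct Sh0 as [l3 [H3 [D3 [S3 H3']]]].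
    assert (l3 = l') by (apply (filter_uniq y); [exact Fy|assumption..]). subst l3.
    destruct (filter_list y (f1 :: K1') Fy (comp L l' a0) H3') as [b [Hb [Hlb Hall']]].
    { intros k [<-|Hk]; [exact Hf1|exact (B1' k Hk)]. }
    destruct Hlb as [be [Sbe Eb]].
    rewrite src_comp in Sbe by exact S3.
    set (al := comp L a0 be).
    assert (Ral : rng L al = rng L a0) by (apply rng_comp; exact Sbe).
    assert (Sl' : src L l' = rng L al) by (rewrite Ral; exact S3).
    assert (Ynu : y (comp L l' al)).
    { unfold al. rewrite comp_assoc by assumption. rewrite <- Eb. exact Hb. }
    assert (Sh1 : shift L y (deg L l') al).
    { exists l'. split; [exact Hl'|]. split; [reflexivity|]. split; [rewrite Ral; exact S3|exact Ynu]. }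
    apply Hs in Sh1. destruct Sh1 as [l4 [H4 [D4 [S4 H4']]]].
    assert (l4 = l) by (apply (filter_uniq x); [exact Fx|assumption..]). subst l4.
    set (mu := comp L l al). set (nu := comp L l' al).
    assert (Emu : mu = comp L a be).
    { unfold mu, al. rewrite Ea. apply comp_assoc; assumption. }
    assert (Sa : src L a = rng L be) by (rewrite Ea, src_comp by exact Sa0; exact Sbe).
    assert (amu : preceq L a mu) by (exists be; split; [exact Sa|exact Emu]).
    assert (bnu : preceq L b nu).
    { exists (idm L (src L b)). rewrite rng_idm. split; [reflexivity|].
      rewrite comp_idm_r. unfold nu, al. rewrite Eb. apply comp_assoc; assumption. }
    assert (Dq : forall q', q' = qmul G (deg L mu) (qinv G (deg L nu)) ->
                 q' = qmul G (deg L l) (qinv G (deg L l'))).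
    { intros q' ->. unfold mu, nu. rewrite !deg_comp by assumption. apply grp_q. }
    assert (Dq' : q = qmul G (deg L mu) (qinv G (deg L nu))).
    { rewrite Hq. unfold mu, nu. rewrite !deg_comp by assumption. symmetry. apply grp_q. }
    exists (Zset mu nu K2 K2').
    split.
    { exists mu, nu, K2, K2'. split; [|split; [|reflexivity]].
      - apply (FA_ext f0); [exact FA0|]. apply (inLam_trans _ a); [apply Hall; left; reflexivity|exact amu].
      - apply (FA_ext f1); [exact FA1|]. apply (inLam_trans _ b); [apply Hall'; left; reflexivity|exact bnu]. }
    split.
    { simpl. split; [exact Gm|]. split; [exact Dq'|].
      split; [exact H4'|]. split; [exact B2|]. split; [exact Ynu|]. split; [exact B2'|].
      intro ga. split.
      - apply (shift_transfer2 x y l l' al Fx Fy Hl Hl'); try assumption.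
        intros be0 Hbe0. apply Hs. exact Hbe0.
      - apply (shift_transfer2 y x l' l al Fy Fx Hl' Hl); try assumption.
        intros be0 Hbe0. apply Hs. exact Hbe0. }
    intros [[x' q'] y'] [Gm' [Hq' [Hmu' [HJ' [Hnu' [HK' Hs']]]]]].
    apply Hsub.
    pose proof Gm' as [Xx' [Xy' _]].
    pose proof Xx' as [Fx' _]. pose proof Xy' as [Fy' _].
    pose proof Fx' as [_ [Hhx _]]. pose proof Fy' as [_ [Hhy _]].
    assert (Lx : x' l) by (apply (hered x' l al Fx'); assumption).
    assert (Ly : y' l') by (apply (hered y' l' al Fy'); [rewrite Ral; exact S3|exact Hnu']).
    simpl. split; [exact Gm'|]. split; [apply Dq; exact Hq'|].
    split.
    { apply (HO x' Xx'). apply BO. split; [|exact HJ'].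
      intros k Hk. apply (Hhx k mu); [|exact Hmu'].
      apply (inLam_trans _ a); [apply Hall; right; exact Hk|exact amu]. }
    split.
    { apply (HO' y' Xy'). apply BO'. split; [|exact HK'].
      intros k Hk. apply (Hhy k nu); [|exact Hnu'].
      apply (inLam_trans _ b); [apply Hall'; right; exact Hk|exact bnu]. }
    split; [exists l; split; [exact Lx|reflexivity]|].
    split; [exists l'; split; [exact Ly|reflexivity]|].
    intro be0. split.
    + apply (shift_transfer x' y' l l' al Fx' Fy' Lx Ly); try assumption.
      intros ga Hga. apply Hs'. exact Hga.
    + apply (shift_transfer y' x' l' l al Fy' Fx' Ly Lx); try assumption.
      intros ga Hga. apply Hs'. exact Hga.
Qed.
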